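(* Suppose users bid their true costs. Let $g_{avg}(\pi)$ denote the expected utility $\mathbb{E}_{\mathbf{Y}_{\mathcal{W}}}[g(\mathbf{y}_{\mathcal{S}})]$ of the set $\mathcal{S}$ (with observations $\mathbf{y}_{\mathcal{S}}$) selected by an adaptive policy $\pi$. Let $\pi_{OPT}$ be the allocation policy of \textsc{SeqOpt} and $\pi_G$ that of \textsc{SeqGreedy} (defined in the context). Then $g_{avg}(\pi_{OPT})\le\frac{e}{e-1}\bigl[g_{avg}(\pi_G)+f_{\max}\bigr]$.
   Context: Setting. $\mathcal{V}$ is a finite set and $f:2^{\mathcal{V}}\to\mathbb{R}_{\ge0}$ is monotone and submodular. $\mathcal{W}$ is a finite set of users and $\mathcal{O}\subseteq 2^{\mathcal{V}}$. Each user $w$ has a random sensing profile $Y_w$ with values in $\mathcal{O}$; the $Y_w$ are independent with known distributions, $\mathbf{Y}_{\mathcal{W}}=(Y_w)_w$. For $\mathcal{S}\subseteq\mathcal{W}$ and values $y_s$, write $\mathbf{y}_{\mathcal{S}}=\{(s,y_s):s\in\mathcal{S}\}$ and $g(\mathbf{y}_{\mathcal{S}})=f(\bigcup_{s\in\mathcal{S}}y_s)$. Each user's maximal contribution is bounded by $f_{\max}$: $g(\mathbf{y}_{\mathcal{S}}\cup\{(w,y)\})-g(\mathbf{y}_{\mathcal{S}})\le f_{\max}$ always. The conditional expected marginal gain is $\Delta_g(w\mid\mathbf{y}_{\mathcal{S}})=\sum_{y\in\mathcal{O}}P(Y_w=y\mid\mathbf{y}_{\mathcal{S}})\,[g(\mathbf{y}_{\mathcal{S}}\cup\{(w,y)\})-g(\mathbf{y}_{\mathcal{S}})]$.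 Each user $w$ has cost $c_w>0$, bid $b_w=c_w$; budget $\mathcal{B}>0$. An adaptive policy sequentially selects a next user as a function of the users selected so far and their observed profiles (the profile of a user is observed once she is selected). \textsc{SeqOpt}: an adaptive policy maximizing $\mathbb{E}[g(\mathbf{y}_{\mathcal{S}})]$ among adaptive policies whose selected set always satisfies $\sum_{s\in\mathcal{S}}c_s\le\mathcal{B}$. \textsc{SeqGreedy}: the sequential greedy policy with known costs: starting from $\mathcal{S}=\emptyset$, repeatedly choose among the remaining users $w^*\in\arg\max_w\Delta_g(w\mid\mathbf{y}_{\mathcal{S}})/b_w$; if adding $w^*$ keeps $\sum_{s\in\mathcal{S}}b_s\le\mathcal{B}$, select it and observe its profile, otherwise discard it; i.e. it is the allocation policy of \textsc{SeqTGreedy} without the proportional-share test. *)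

(* Defs.v *)
From HB Require Import structures.
From mathcomp Require Import all_boot all_order all_algebra.
From mathcomp Require Import reals sequences exp.
Set Implicit Arguments. Unset Strict Implicit. Unset Printing Implicit Defensive.
Import Order.TTheory GRing.Theory Num.Theory.
Local Open Scope ring_scope.

Section Defs.
Variables (R : realType) (W V : finType).

(* An observation history: the selected users in order, with observed profiles. *)
Definition history := seq (W * {set V}).
Definition realization := {ffun W -> {set V}}.

Definition hist_users (h : history) : {set W} := [set q.1 | q in h].
Definition hist_union (h : history) : {set V} := \bigcup_(q <- h) q.2.
Definition g (f : {set V} -> R) (h : history) : R := f (hist_union h).
Definition hist_cost (c : W -> R) (h : history) : R := \sum_(q <- h) c q.1.

Definition probY (p : W -> {set V} -> R) (ys : realization) : R :=
  \prod_(w : W) p w (ys w).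
Definition consistent (h : history) (ys : realization) : bool :=
  all (fun q => ys q.1 == q.2) h.
Definition cond_prob (p : W -> {set V} -> R) (w : W) (y : {set V}) (h : history) : R :=
  (\sum_(ys : realization | consistent h ys && (ys w == y)) probY p ys)
  / (\sum_(ys : realization | consistent h ys) probY p ys).
Definition Delta (f : {set V} -> R) (p : W -> {set V} -> R) (O : {set {set V}})
    (w : W) (h : history) : R :=
  \sum_(y in O) cond_prob p w y h * (f (hist_union h :|: y) - f (hist_union h)).

(* Execution of an adaptive policy (history -> next user, or None = stop) on
   a realization; the policy stops when it returns None or re-selects a user. *)
Fixpoint run_policy (pi : history -> option W) (fuel : nat) (h : history)
    (ys : realization) : history :=
  match fuel with
  | 0 => h
  | n.+1 => match pi h with
            | Some w => if w \in hist_users h then h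
                        else run_policy pi n (rcons h (w, ys w)) ys
            | None => h
            end
  end.
Definition policy_outcome (pi : history -> option W) (ys : realization) : history :=
  run_policy pi #|W| [::] ys.

Definition feasible_policy (c : W -> R) (B : R) (pi : history -> option W) : Prop :=
  forall ys, hist_cost c (policy_outcome pi ys) <= B.

(* SeqGreedy with a tie-breaking rule pick (choosing among remaining users Rem) *)
Fixpoint greedy_run (c : W -> R) (B : R) (pick : history -> {set W} -> W)
    (fuel : nat) (h : history) (Rem : {set W}) (ys : realization) : history :=
  match fuel with
  | 0 => h
  | n.+1 => if Rem == set0 then h else
            let w := pick h Rem in
            let h' := if hist_cost c h + c w <= B then rcons h (w, ys w) else h in
            greedy_run c B pick n h' (Rem :\ w) ys
  end.
Definition greedy_outcome c B pick (ys : realization) : history :=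
  greedy_run c B pick #|W| [::] setT ys.

Definition greedy_rule (f : {set V} -> R) (p : W -> {set V} -> R) (O : {set {set V}})
    (c : W -> R) (pick : history -> {set W} -> W) : Prop :=
  forall h Rem, Rem != set0 ->
    pick h Rem \in Rem /\
    forall w, w \in Rem -> Delta f p O w h / c w <= Delta f p O (pick h Rem) h / c (pick h Rem).

Definition g_avg (f : {set V} -> R) (p : W -> {set V} -> R)
    (outcome : realization -> history) : R :=
  \sum_(ys : realization) probY p ys * g f (outcome ys).

End Defs.

(* Main.v *)
Require Import Defs.
From HB Require Import structures.
From mathcomp Require Import all_boot all_order all_algebra.
From mathcomp Require Import reals sequences exp.
From mathcomp Require Import ring lra.
Import Order.TTheory GRing.Theory Num.Theory.
Local Open Scope ring_scope.

Section Main.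
Variables (R : realType) (V W : finType) (f : {set V} -> R)
  (O : {set {set V}}) (p : W -> {set V} -> R) (c : W -> R) (B fmax : R).
Hypothesis f_ge0 : forall A, 0 <= f A.
Hypothesis f_mono : forall A A' : {set V}, A \subset A' -> f A <= f A'.
Hypothesis f_submod : forall (A A' : {set V}) (x : V), A \subset A' -> x \notin A' ->
      f (x |: A') - f A' <= f (x |: A) - f A.
Hypothesis p_ge0 : forall w y, 0 <= p w y.
Hypothesis p_supp : forall w y, y \notin O -> p w y = 0.
Hypothesis p_sum1 : forall w, \sum_(y : {set V}) p w y = 1.
Hypothesis c_gt0 : forall w, 0 < c w.
Hypothesis B_gt0 : 0 < B.

Notation hist := (history W V).
Notation real := {ffun W -> {set V}}.
Definition P (ys : real) : R := probY p ys.
Definition upd (ys : real) (w0 : W) (z : {set V}) : real :=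
  [ffun x => if x == w0 then z else ys x].

Lemma P_ge0 ys : 0 <= P ys.
Proof. by rewrite /P /probY; apply: prodr_ge0 => w _. Qed.

Lemma P_sum1 : \sum_ys P ys = 1.
Proof.
rewrite /P /probY -(bigA_distr_bigA (fun w y => p w y)) /=.
by rewrite big1 // => w _; rewrite p_sum1.
Qed.

Lemma upd_id ys w0 : upd ys w0 (ys w0) = ys.
Proof. by apply/ffunP => x; rewrite ffunE; case: eqP => // ->. Qed.
Lemma upd_upd ys w0 z z' : upd (upd ys w0 z) w0 z' = upd ys w0 z'.
Proof. by apply/ffunP => x; rewrite !ffunE; case: eqP. Qed.
Lemma upd_at ys w0 z : upd ys w0 z w0 = z.
Proof. by rewrite ffunE eqxx. Qed.

Definition Q w0 (ys : real) : R := \prod_(w | w != w0) p w (ys w).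
Lemma P_split w0 ys : P ys = p w0 (ys w0) * Q w0 ys.
Proof. by rewrite /P /probY (bigD1 w0). Qed.
Lemma Q_upd w0 ys z : Q w0 (upd ys w0 z) = Q w0 ys.
Proof. by apply: eq_bigr => w /negPf hw; rewrite ffunE hw. Qed.

Lemma resample w0 (K : real -> {set V} -> R) :
  (forall ys z z', K (upd ys w0 z') z = K ys z) ->
  \sum_ys P ys * K ys (ys w0) = \sum_ys P ys * \sum_z p w0 z * K ys z.
Proof.
move=> Kinv.
have -> : \sum_ys P ys * \sum_z p w0 z * K ys z =
   \sum_(ys : real) \sum_(z : {set V}) (p w0 (ys w0) * Q w0 ys * p w0 z * K ys z).
  apply: eq_bigr => ys _; rewrite big_distrr /= (P_split w0).
  by apply: eq_bigr => z _; rewrite !mulrA.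
rewrite pair_big /=.
pose h (q : real * {set V}) := (upd q.1 w0 q.2, q.1 w0).
have hinj : injective h.
  have hK : cancel h h.
    by case=> ys z; rewrite /h /= upd_at upd_upd upd_id.
  exact: can_inj hK.
rewrite (reindex_inj hinj) /=.
rewrite (eq_bigr (fun j => (fun (ys : real) (z : {set V}) => P ys * K ys (ys w0) * p w0 z) j.1 j.2)); last first.
  case=> ys z _ /=; rewrite upd_at Q_upd Kinv (P_split w0).
  by rewrite mulrC !mulrA; ring.
rewrite -(pair_bigA _ (fun (ys : real) (z : {set V}) => P ys * K ys (ys w0) * p w0 z)) /=.
by apply: eq_bigr => ys _; rewrite -big_distrr /= p_sum1 mulr1.
Qed.


Lemma users_mem (h : hist) w : (w \in hist_users h) = (w \in map fst h).
Proof.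
apply/imsetP/mapP => [[q qh ->]|[q qh ->]]; by exists q.
Qed.

Lemma users_rcons (h : hist) q : hist_users (rcons h q) = q.1 |: hist_users h.
Proof.
by apply/setP => w; rewrite in_setU1 !users_mem map_rcons mem_rcons inE.
Qed.

Lemma union_rcons (h : hist) q : hist_union (rcons h q) = hist_union h :|: q.2.
Proof. by rewrite /hist_union big_rcons. Qed.

Lemma cost_rcons (h : hist) q : hist_cost c (rcons h q) = hist_cost c h + c q.1.
Proof. by rewrite /hist_cost big_rcons. Qed.

Lemma cons_rcons (h : hist) q ys :
  consistent (rcons h q) ys = (ys q.1 == q.2) && consistent h ys.
Proof. by rewrite /consistent all_rcons. Qed.

Lemma cons_cat (h h' : hist) ys :
  consistent (h ++ h') ys = consistent h ys && consistent h' ys.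
Proof. by rewrite /consistent all_cat. Qed.

Lemma cons_upd (h : hist) ys w0 z : w0 \notin hist_users h ->
  consistent h (upd ys w0 z) = consistent h ys.
Proof.
rewrite users_mem => hw; apply: eq_in_all => q qh /=; rewrite ffunE.
case: (q.1 =P w0) => // e; case/negP: hw; rewrite -e; exact: map_f.
Qed.

Lemma union_sup (h : hist) q : q \in h -> q.2 \subset hist_union h.
Proof.
rewrite /hist_union; elim: h => // a l IH; rewrite inE big_cons => /orP [/eqP ->|/IH H].
  exact: subsetUl.
exact: subset_trans H (subsetUr _ _).
Qed.

Lemma cons_sub (h : hist) ys w : consistent h ys -> w \in hist_users h ->
  ys w \subset hist_union h.
Proof.
move=> /allP hc; rewrite users_mem => /mapP [q qh ->].
rewrite (eqP (hc q qh)); exact: union_sup.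
Qed.

Lemma gain_anti (A A' Y : {set V}) : A \subset A' ->
  f (A' :|: Y) - f A' <= f (A :|: Y) - f A.
Proof.
move=> sAA'; move: {2}#|Y| (leqnn #|Y|) => n; elim: n Y => [|n IH] Y hY.
  move: hY; rewrite leqn0 cards_eq0 => /eqP ->; rewrite !setU0 !subrr.
  by [].
case: (set_0Vmem Y) => [->|[x xY]]; first by rewrite !setU0 !subrr.
have eY : Y = x |: (Y :\ x) by rewrite setD1K.
have hY' : (#|Y :\ x| <= n)%N.
  by move: hY; rewrite (cardsD1 x Y) xY add1n ltnS.
have IH' := IH _ hY'.
have e1 : forall A0 : {set V}, A0 :|: Y = x |: (A0 :|: (Y :\ x)).
  by move=> A0; rewrite {1}eY setUCA.
rewrite !e1.
have step : f (x |: (A' :|: Y :\ x)) - f (A' :|: Y :\ x) <=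
            f (x |: (A :|: Y :\ x)) - f (A :|: Y :\ x).
  case: (boolP (x \in A' :|: Y :\ x)) => hx.
    rewrite (setUidPr _); last by rewrite sub1set.
    rewrite subrr subr_ge0; apply: f_mono; exact: subsetUr.
  apply: f_submod => //; exact: setSU.
have -> : f (x |: (A' :|: Y :\ x)) - f A' =
  (f (x |: (A' :|: Y :\ x)) - f (A' :|: Y :\ x)) + (f (A' :|: Y :\ x) - f A') by ring.
have -> : f (x |: (A :|: Y :\ x)) - f A =
  (f (x |: (A :|: Y :\ x)) - f (A :|: Y :\ x)) + (f (A :|: Y :\ x) - f A) by ring.
exact: lerD.
Qed.

Lemma subadd (A : {set V}) (s : hist) :
  f (A :|: hist_union s) - f A <= \sum_(q <- s) (f (A :|: q.2) - f A).
Proof.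
elim: s A => [|a l IH] A.
  by rewrite /hist_union !big_nil setU0 subrr.
rewrite /hist_union !big_cons /= -/(hist_union l).
have -> : f (A :|: (a.2 :|: hist_union l)) - f A =
  (f ((A :|: a.2) :|: hist_union l) - f (A :|: a.2)) + (f (A :|: a.2) - f A).
  by rewrite setUA; ring.
rewrite addrC lerD2l.
apply: le_trans (IH A); apply: gain_anti; exact: subsetUl.
Qed.

Definition Delta0 w (A : {set V}) : R := \sum_z p w z * (f (A :|: z) - f A).

Lemma Delta0_ge0 w A : 0 <= Delta0 w A.
Proof.
apply: sumr_ge0 => z _; apply: mulr_ge0 => //.
rewrite subr_ge0; apply: f_mono; exact: subsetUl.
Qed.

Lemma cond_prob_indep (h : hist) ys w y : P ys != 0 -> consistent h ys ->
  w \notin hist_users h -> cond_prob p w y h = p w y.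
Proof.
move=> Pne hc hw.
set den := \sum_(ys' | consistent h ys') probY p ys'.
have den_pos : 0 < den.
  rewrite /den (bigD1 ys) //=; apply: (lt_le_trans (y := P ys)).
    by rewrite lt_def Pne P_ge0.
  rewrite lerDl; apply: sumr_ge0 => ys' _; exact: P_ge0.
rewrite /cond_prob -/den.
suff -> : \sum_(ys' | consistent h ys' && (ys' w == y)) probY p ys' = p w y * den.
  by rewrite mulfK // gt_eqF.
pose K (ys' : real) (z : {set V}) : R := (consistent h ys' && (z == y))%:R.
have Kinv : forall ys' z z', K (upd ys' w z') z = K ys' z.
  by move=> ys' z z'; rewrite /K cons_upd.
have := @resample w K Kinv.
move=> HH; rewrite big_mkcond /=.
have -> : \sum_ys' (if consistent h ys' && (ys' w == y) then probY p ys' else 0) =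
          \sum_ys' P ys' * K ys' (ys' w).
  apply: eq_bigr => ys' _; rewrite /K; case: ifP => _; by rewrite ?mulr1 ?mulr0.
rewrite HH.
rewrite /den big_distrr /= [RHS]big_mkcond /=; apply: eq_bigr => ys' _.
rewrite (bigD1 y) //= big1 => [|z /negPf zy]; last by rewrite /K zy andbF mulr0.
rewrite /K eqxx andbT addr0; case: (consistent h ys'); rewrite ?mulr1 ?mulr0 //.
by rewrite mulrC.
Qed.

Lemma Delta_indep (h : hist) ys w : P ys != 0 -> consistent h ys ->
  w \notin hist_users h -> Delta f p O w h = Delta0 w (hist_union h).
Proof.
move=> Pne hc hw; rewrite /Delta /Delta0 [RHS](bigID (fun z => z \in O)) /=.
rewrite [X in _ = _ + X]big1 ?addr0 => [|z /p_supp ->]; last by rewrite mul0r.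
by apply: eq_bigr => z _; rewrite (@cond_prob_indep h ys w z Pne hc hw).
Qed.

Variable pick : hist -> {set W} -> W.
Hypothesis pick_greedy : greedy_rule f p O c pick.

Definition nxt (h : hist) : option W :=
  if ~: hist_users h == set0 then None else Some (pick h (~: hist_users h)).

Lemma nxt_notin h w : nxt h = Some w -> w \notin hist_users h.
Proof.
rewrite /nxt; case: ifP => // hne [<-].
by have [+ _] := pick_greedy h _ (negbT hne); rewrite inE.
Qed.

Fixpoint irun (th : R) (n : nat) (h : hist) (ys : real) : hist :=
  match n with
  | 0 => h
  | n'.+1 => match nxt h with
             | Some w => if hist_cost c h + c w <= th then irun th n' (rcons h (w, ys w)) ys
                         else h
             | None => h
             end
  end.

Lemma irun_prefix th n h ys : exists s, irun th n h ys = h ++ s.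
Proof.
elim: n h => [|n IH] h /=; first by exists [::]; rewrite cats0.
case: (nxt h) => [w|]; last by exists [::]; rewrite cats0.
case: ifP => _; last by exists [::]; rewrite cats0.
have [s ->] := IH (rcons h (w, ys w)); exists ((w, ys w) :: s).
by rewrite -cats1 -catA.
Qed.

Lemma irun_cons th n h ys : consistent h ys -> consistent (irun th n h ys) ys.
Proof.
elim: n h => [|n IH] h //= hc; case: (nxt h) => [w|] //; case: ifP => // _.
by apply: IH; rewrite cons_rcons eqxx.
Qed.

Lemma irun_stop th n h ys ys' :
  consistent (irun th n h ys) ys' -> irun th n h ys' = irun th n h ys.
Proof.
elim: n h => [|n IH] h //=; case: (nxt h) => [w|] //; case: ifP => // _ hc.
have hc' := hc; have [s es] := irun_prefix th n (rcons h (w, ys w)) ys.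
move: hc'; rewrite es cons_cat cons_rcons /= => /andP [/andP [/eqP -> _] _].
by rewrite -es; apply: IH.
Qed.

Lemma irun_uniq th n h ys : uniq (map fst h) -> uniq (map fst (irun th n h ys)).
Proof.
elim: n h => [|n IH] h //= hu; case e: (nxt h) => [w|] //; case: ifP => // _.
apply: IH; rewrite map_rcons rcons_uniq hu andbT /= -users_mem.
exact: nxt_notin.
Qed.

Lemma irun_cost th n h ys : hist_cost c h <= th -> hist_cost c (irun th n h ys) <= th.
Proof.
elim: n h => [|n IH] h //= hc; case: (nxt h) => [w|] //; case: ifP => // hle.
by apply: IH; rewrite cost_rcons.
Qed.

Lemma irun_stuck th n h ys : th <= hist_cost c h -> irun th n h ys = h.
Proof.
case: n => [|n] //= hle; case: (nxt h) => [w|] //; case: ifP => // hle2.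
exfalso; have := c_gt0 w; move: hle hle2; lra.
Qed.

Lemma irun_term th n h ys : (#|~: hist_users h| <= n)%N ->
  match nxt (irun th n h ys) with
  | Some w => th < hist_cost c (irun th n h ys) + c w
  | None => true end.
Proof.
elim: n h => [|n IH] h /=.
  rewrite leqn0 cards_eq0 => /eqP e; by rewrite /nxt e eqxx.
move=> hcard; case e: (nxt h) => [w|]; last by rewrite e.
case: ifP => hle; last by rewrite e ltNge hle.
apply: IH; rewrite users_rcons /=.
have -> : ~: (w |: hist_users h) = (~: hist_users h) :\ w.
  by apply/setP => x; rewrite !inE negb_or.
move: hcard; rewrite (cardsD1 w (~: hist_users h)) inE (@nxt_notin h w e) /=.
by rewrite add1n ltnS.
Qed.

Definition stopping (H : real -> hist) :=
  (forall ys, consistent (H ys) ys) /\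
  (forall ys ys', consistent (H ys) ys' -> H ys' = H ys).

Lemma stop_upd H ys w0 z : stopping H -> w0 \notin hist_users (H ys) ->
  H (upd ys w0 z) = H ys.
Proof.
move=> [Hc Hs] hw; apply: Hs; rewrite cons_upd //.
Qed.

Lemma stop_upd_mem H ys w0 z : stopping H ->
  (w0 \in hist_users (H (upd ys w0 z))) = (w0 \in hist_users (H ys)).
Proof.
move=> sH; case: (boolP (w0 \in hist_users (H ys))) => h1.
  case: (boolP (w0 \in hist_users (H (upd ys w0 z)))) => // h2.
  have := @stop_upd H (upd ys w0 z) w0 (ys w0) sH h2.
  by rewrite upd_upd upd_id => e; move: h1; rewrite e (negPf h2).
by rewrite stop_upd // (negPf h1).
Qed.

Definition psi th ys := irun th #|W| [::] ys.

Lemma psi_stopping th : stopping (psi th).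
Proof.
split=> [ys|ys ys']; first exact: irun_cons.
exact: irun_stop.
Qed.

Lemma cost_users (h : hist) : uniq (map fst h) ->
  hist_cost c h = \sum_(w in hist_users h) c w.
Proof.
move=> hu; rewrite /hist_cost -(big_map fst xpredT c) big_uniq //.
by apply: eq_bigl => w; rewrite users_mem.
Qed.

Variable pi_opt : hist -> option W.
Hypothesis opt_feas : feasible_policy c B pi_opt.

Lemma rp_cons (pi : hist -> option W) n (h : hist) (ys : real) : consistent h ys -> consistent (run_policy pi n h ys) ys.
Proof.
elim: n h => [|n IH] h //= hc; case: (pi h) => [w|] //; case: ifP => // _.
by apply: IH; rewrite cons_rcons eqxx.
Qed.

Lemma rp_uniq (pi : hist -> option W) n (h : hist) (ys : real) : uniq (map fst h) -> uniq (map fst (run_policy pi n h ys)).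
Proof.
elim: n h => [|n IH] h //= hu; case: (pi h) => [w|] //; case: ifP => // hw.
by apply: IH; rewrite map_rcons rcons_uniq hu andbT -users_mem hw.
Qed.

Lemma rp_mono (pi : hist -> option W) n (h : hist) (ys : real) w : w \in hist_users h -> w \in hist_users (run_policy pi n h ys).
Proof.
elim: n h => [|n IH] h //= hw; case: (pi h) => [w'|] //; case: ifP => // _.
by apply: IH; rewrite users_rcons inE hw orbT.
Qed.

Lemma rp_inv (pi : hist -> option W) n (h : hist) (ys : real) w0 z :
  (w0 \in hist_users (run_policy pi n h (upd ys w0 z))) =
  (w0 \in hist_users (run_policy pi n h ys)).
Proof.
elim: n h => [|n IH] h //=; case: (pi h) => [w|] //; case: ifP => // _.
case: (eqVneq w w0) => [->|ne].
  have hm : forall y : {set V}, w0 \in hist_users (rcons h (w0, y)).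
    by move=> y; rewrite users_rcons /= setU11.
  by rewrite !rp_mono.
by rewrite ffunE (negPf ne) IH.
Qed.

Definition tau ys := policy_outcome pi_opt ys.

Lemma tau_cons ys : consistent (tau ys) ys.
Proof. exact: rp_cons. Qed.
Lemma tau_uniq ys : uniq (map fst (tau ys)).
Proof. exact: rp_uniq. Qed.

Lemma lemma2 (H : real -> hist) (M : hist -> R) : stopping H ->
  (forall ys, P ys != 0 -> forall w, w \notin hist_users (H ys) ->
     Delta0 w (hist_union (H ys)) <= c w * M (H ys)) ->
  (forall ys, P ys != 0 -> 0 <= M (H ys)) ->
  \sum_ys P ys * (f (hist_union (H ys) :|: hist_union (tau ys)) - f (hist_union (H ys)))
  <= B * \sum_ys P ys * M (H ys).
Proof.
move=> sH hM hM0.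
pose cond ys w := (w \in hist_users (tau ys)) && (w \notin hist_users (H ys)).
pose G ys w := if cond ys w then f (hist_union (H ys) :|: ys w) - f (hist_union (H ys)) else 0.
have step1 : forall ys, f (hist_union (H ys) :|: hist_union (tau ys)) - f (hist_union (H ys))
    <= \sum_w G ys w.
  move=> ys; apply: le_trans (subadd _ _) _.
  rewrite (eq_big_seq (fun q => f (hist_union (H ys) :|: ys q.1) - f (hist_union (H ys)))); last first.
    move=> q qt; have /allP := tau_cons ys; move=> /(_ q qt) /eqP ->; by [].
  rewrite -(big_map fst xpredT (fun w => f (hist_union (H ys) :|: ys w) - f (hist_union (H ys)))).
  rewrite big_uniq ?tau_uniq // [X in _ <= X](bigID (fun w => w \in map fst (tau ys))) /=.
  rewrite [X in _ <= _ + X]big1 ?addr0 => [|w /negPf hw]; last first.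
    by rewrite /G /cond users_mem hw.
  apply: ler_sum => w hw; rewrite /G /cond users_mem hw /=.
  case: ifP => // hH.
  rewrite (setUidPl _) ?subrr //; apply: cons_sub; first by case: sH.
  by move: hH; case: (w \in hist_users (H ys)).
apply: (le_trans (y := \sum_ys P ys * \sum_w G ys w)).
  by apply: ler_sum => ys _; apply: ler_wpM2l; [exact: P_ge0 | exact: step1].
have step2 : forall w, \sum_ys P ys * G ys w <=
    \sum_ys P ys * (if cond ys w then c w * M (H ys) else 0).
  move=> w.
  pose K ys z := if cond ys w then f (hist_union (H ys) :|: z) - f (hist_union (H ys)) else 0.
  have Kinv : forall ys z z', K (upd ys w z') z = K ys z.
    move=> ys z z'; rewrite /K /cond rp_inv stop_upd_mem //.
    case: (boolP (w \in hist_users (H ys))) => hw; first by rewrite andbF.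
    by rewrite stop_upd.
  have := @resample w K Kinv; rewrite /K => e.
  rewrite (eq_bigr (fun ys => P ys * K ys (ys w))) // e /K.
  apply: ler_sum => ys _.
  case: (eqVneq (P ys) 0) => [->|Pne]; first by rewrite !mul0r.
  apply: ler_wpM2l; first exact: P_ge0.
  case: ifP => hc; last by rewrite big1 // => z _; rewrite mulr0.
  apply: le_trans (hM ys Pne w _); last by case/andP: hc.
  by rewrite /Delta0.
rewrite (eq_bigr (fun ys => \sum_w P ys * G ys w)); last by move=> ys _; rewrite big_distrr.
rewrite exchange_big /=.
apply: (le_trans (y := \sum_w \sum_ys P ys * (if cond ys w then c w * M (H ys) else 0))).
  apply: ler_sum => w _; exact: step2.
rewrite exchange_big /= big_distrr /=; apply: ler_sum => ys _.
case: (eqVneq (P ys) 0) => [->|Pne].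
  by rewrite big1 ?mul0r ?mulr0 // => w _; rewrite mul0r.
have hP := P_ge0 ys; have hM' := hM0 ys Pne.
rewrite -big_distrr /= mulrCA; apply: ler_wpM2l => //.
rewrite (eq_bigr (fun w => M (H ys) * (if cond ys w then c w else 0))); last first.
  by move=> w _; case: ifP; rewrite ?mulr0 // mulrC.
rewrite -big_distrr /= mulrC; apply: ler_wpM2r => //.
apply: (le_trans (y := \sum_(w in hist_users (tau ys)) c w)).
  rewrite [X in _ <= X]big_mkcond /=; apply: ler_sum => w _.
  rewrite /cond; case: (w \in hist_users (tau ys)) => //=.
    by case: ifP => // _; apply: ltW.
rewrite -cost_users ?tau_uniq //; exact: opt_feas.
Qed.

Definition M (h : hist) : R :=
  match nxt h with Some w => Delta f p O w h / c w | None => 0 end.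

Lemma M_bound (h : hist) ys w : P ys != 0 -> consistent h ys ->
  w \notin hist_users h -> Delta0 w (hist_union h) <= c w * M h.
Proof.
move=> Pne hc hw.
have hne : ~: hist_users h != set0.
  by apply/set0Pn; exists w; rewrite inE.
have [pin pmax] := pick_greedy h _ hne.
rewrite /M /nxt (negPf hne).
have := pmax w; rewrite inE => /(_ hw).
rewrite (@Delta_indep h ys w Pne hc hw) => hle.
rewrite -(ler_pdivrMl _ _ (c_gt0 w)) mulrC; exact: hle.
Qed.

Lemma M_ge0 (h : hist) ys : P ys != 0 -> consistent h ys -> 0 <= M h.
Proof.
move=> Pne hc; rewrite /M; case e: (nxt h) => [w|] //.
have hw := @nxt_notin h w e.
rewrite (@Delta_indep h ys w Pne hc hw); apply: divr_ge0; first exact: Delta0_ge0.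
exact: ltW.
Qed.

Lemma M_step (h : hist) ys w : P ys != 0 -> consistent h ys ->
  nxt h = Some w -> c w * M h = Delta0 w (hist_union h).
Proof.
move=> Pne hc e; rewrite /M e (@Delta_indep h ys w Pne hc (@nxt_notin h w e)).
by rewrite mulrC divfK // gt_eqF.
Qed.

Definition times : seq R := [seq \sum_(w in S0) c w | S0 : {set W} <- enum [set: {set W}]].

Lemma time_mem (h : hist) : uniq (map fst h) -> hist_cost c h \in times.
Proof.
move=> hu; rewrite cost_users //; apply/mapP; exists (hist_users h) => //.
by rewrite mem_enum inE.
Qed.

Lemma two_thr s t n (h : hist) ys : (#|~: hist_users h| <= n)%N -> uniq (map fst h) ->
  s <= t -> (forall x, x \in times -> x < t -> x <= s) ->
  irun t n h ys =
  match nxt (irun s n h ys) with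
  | Some w => if hist_cost c (irun s n h ys) + c w == t
              then rcons (irun s n h ys) (w, ys w) else irun s n h ys
  | None => irun s n h ys end.
Proof.
move=> + + st nt; elim: n h => [|n IH] h /=.
  rewrite leqn0 cards_eq0 => /eqP e _; by rewrite /nxt e eqxx.
move=> hcard hu; case e: (nxt h) => [w|]; last by rewrite e.
have hw := @nxt_notin h w e.
have hu' : uniq (map fst (rcons h (w, ys w))).
  by rewrite map_rcons rcons_uniq hu andbT -users_mem.
case: (boolP (hist_cost c h + c w <= s)) => hs.
  rewrite (le_trans hs st); apply: IH => //.
  rewrite users_rcons /=.
  have -> : ~: (w |: hist_users h) = (~: hist_users h) :\ w.
    by apply/setP => x; rewrite !inE negb_or.
  move: hcard; rewrite (cardsD1 w (~: hist_users h)) inE hw /=.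
  by rewrite add1n ltnS.
rewrite e.
have tm : hist_cost c h + c w \in times by have := @time_mem _ hu'; rewrite cost_rcons.
have ht : t <= hist_cost c h + c w.
  rewrite leNgt; apply/negP => lt; have := nt _ tm lt; by rewrite (negPf hs).
case: eqP => [et|net].
  rewrite et lexx; case: n {IH hcard} => [|n] //=.
  by apply: (irun_stuck t n.+1); rewrite cost_rcons et.
have -> // : (hist_cost c h + c w <= t) = false.
  by apply/negbTE; rewrite -ltNge lt_def ht andbT; apply/eqP => e'; apply: net.

Qed.

Lemma stop_inv (H : real -> hist) w (G : hist -> {set V} -> R) : stopping H ->
  forall ys z z',
  (if w \in hist_users (H (upd ys w z')) then 0 else G (H (upd ys w z')) z) =
  (if w \in hist_users (H ys) then 0 else G (H ys) z).
Proof.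
move=> sH ys z z'; rewrite stop_upd_mem //.
by case: (boolP (w \in hist_users (H ys))) => // hw; rewrite stop_upd.
Qed.

Definition EI th := \sum_ys P ys *
  (f (hist_union (psi th ys)) + (th - hist_cost c (psi th ys)) * M (psi th ys)).
Definition Ssum th := \sum_ys P ys * M (psi th ys).

Lemma EI_step s t : 0 <= s -> s <= t -> (forall x, x \in times -> x < t -> x <= s) ->
  EI t = EI s + (t - s) * Ssum s.
Proof.
move=> s0 st nt.
pose jump ys := match nxt (psi s ys) with
  | Some w => if hist_cost c (psi s ys) + c w == t then
      f (hist_union (psi s ys) :|: ys w) - f (hist_union (psi s ys))
      - Delta0 w (hist_union (psi s ys)) else 0
  | None => 0 end.
have hpsi : forall ys, psi t ys = match nxt (psi s ys) with
  | Some w => if hist_cost c (psi s ys) + c w == t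
              then rcons (psi s ys) (w, ys w) else psi s ys
  | None => psi s ys end.
  move=> ys; apply: two_thr => //; exact: max_card.
have per : forall ys, P ys * (f (hist_union (psi t ys)) + (t - hist_cost c (psi t ys)) * M (psi t ys))
   = P ys * (f (hist_union (psi s ys)) + (s - hist_cost c (psi s ys)) * M (psi s ys))
     + (t - s) * (P ys * M (psi s ys)) + P ys * jump ys.
  move=> ys; case: (eqVneq (P ys) 0) => [->|Pne]; first by rewrite !mul0r mulr0 !addr0.
  have hc := @irun_cons s #|W| [::] ys isT.
  rewrite /jump hpsi; case e: (nxt (psi s ys)) => [w|]; last by rewrite mulr0 addr0; ring.
  case: eqP => et; last by rewrite mulr0 addr0; ring.
  rewrite union_rcons cost_rcons /= et subrr mul0r addr0.
  have := @M_step _ ys w Pne hc e; move=> <-.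
  have -> : c w = t - hist_cost c (psi s ys) by rewrite -et; ring.
  ring.
rewrite /EI (eq_bigr _ (fun ys _ => per ys)) !big_split /= -big_distrr /=.
rewrite -/(Ssum s) -[RHS]addr0; congr (_ + _).
(* the jumps sum to zero *)
pose G w h z := if (nxt h == Some w) && (hist_cost c h + c w == t) then
      f (hist_union h :|: z) - f (hist_union h) - Delta0 w (hist_union h) else 0.
pose K w ys z := if w \in hist_users (psi s ys) then 0 else G w (psi s ys) z.
have ej : forall ys, jump ys = \sum_w K w ys (ys w).
  move=> ys; rewrite /jump; case e: (nxt (psi s ys)) => [w|].
    rewrite (bigD1 w) //= big1 => [|w' nw]; last first.
      rewrite /K /G; case: ifP => // _ /=; rewrite e.
      by have -> : (Some w == Some w') = false by apply/negbTE; rewrite eq_sym; exact: nw.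
    rewrite addr0 /K /G (negPf (@nxt_notin _ w e)) /= e eqxx /=; by case: ifP.
  by rewrite big1 // => w _; rewrite /K /G /= e; case: ifP.
rewrite (eq_bigr (fun ys => \sum_w P ys * K w ys (ys w))); last first.
  by move=> ys _; rewrite ej big_distrr.
rewrite exchange_big /=; apply: big1 => w _.
have Kinv : forall ys z z', K w (upd ys w z') z = K w ys z.
  by move=> ys z z'; rewrite /K (@stop_inv (psi s) w (G w) (psi_stopping s)).
rewrite (@resample w (K w) Kinv); apply: big1 => ys _.
case: (eqVneq (P ys) 0) => [->|Pne]; first by rewrite mul0r.
rewrite /K /G; case: (boolP (w \in hist_users (psi s ys))) => hw.
  by under eq_bigr do rewrite mulr0; rewrite big1_eq mulr0.
case: (boolP ((nxt (psi s ys) == Some w) && (hist_cost c (psi s ys) + c w == t))) => hc.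
  under eq_bigr do rewrite mulrBr.
  rewrite sumrB -big_distrl /= p_sum1 mul1r -/(Delta0 w _) subrr mulr0 //.
by under eq_bigr do rewrite mulr0; rewrite big1_eq mulr0.
Qed.

Definition OPT := \sum_ys P ys * f (hist_union (tau ys)).

Lemma psi_cost th ys : 0 <= th -> hist_cost c (psi th ys) <= th.
Proof. by move=> h0; apply: irun_cost; rewrite /hist_cost big_nil. Qed.

Lemma gap_bound s : 0 <= s -> OPT - EI s <= B * Ssum s.
Proof.
move=> s0.
apply: (le_trans (y := \sum_ys P ys * (f (hist_union (psi s ys) :|: hist_union (tau ys))
     - f (hist_union (psi s ys))))); last first.
  apply: lemma2; first exact: psi_stopping.
    move=> ys Pne w hw; apply: (@M_bound _ ys w Pne) => //; exact: irun_cons.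
  move=> ys Pne; apply: (@M_ge0 _ ys Pne); exact: irun_cons.
rewrite /OPT /EI -sumrB; apply: ler_sum => ys _.
case: (eqVneq (P ys) 0) => [->|Pne]; first by rewrite !mul0r subrr.
have hP := P_ge0 ys.
have hM := @M_ge0 _ ys Pne (@irun_cons s #|W| [::] ys isT).
have hC := @psi_cost s ys s0.
have hm : f (hist_union (tau ys)) <= f (hist_union (psi s ys) :|: hist_union (tau ys)).
  by apply: f_mono; exact: subsetUr.
have hsm : 0 <= (s - hist_cost c (psi s ys)) * M (psi s ys).
  by apply: mulr_ge0 => //; rewrite subr_ge0.
rewrite -!mulrBr; apply: ler_wpM2l => //.
by move: hm hsm; lra.
Qed.

Section MaxSeq.
Variable t : R.
Definition mx (l : seq R) := \big[Num.max/0]_(x <- l | x < t) x.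

Lemma mx_ge0 l : 0 <= mx l.
Proof.
rewrite /mx; elim: l => [|a l IH]; first by rewrite big_nil.
by rewrite big_cons; case: ifP => // _; rewrite le_max IH orbT.
Qed.

Lemma mx_lt l : 0 < t -> mx l < t.
Proof.
move=> t0; rewrite /mx; elim: l => [|a l IH]; first by rewrite big_nil.
by rewrite big_cons; case: ifP => // ha; rewrite gt_max ha IH.
Qed.

Lemma mx_ub l x : x \in l -> x < t -> x <= mx l.
Proof.
rewrite /mx; elim: l => [|a l IH] //; rewrite inE big_cons => /orP [/eqP ->|xl] xt.
  by rewrite xt le_max lexx.
case: ifP => _; last exact: IH.
by rewrite le_max IH ?orbT.
Qed.

Lemma mx_mem l : mx l = 0 \/ mx l \in l.
Proof.
rewrite /mx; elim: l => [|a l IH]; first by rewrite big_nil; left.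
rewrite big_cons; case: ifP => _.
  rewrite /Num.max; case: ifP => _; last by right; rewrite inE eqxx.
  by case: IH => [->|h]; [left|right; rewrite inE h orbT].
by case: IH => [->|h]; [left|right; rewrite inE h orbT].
Qed.
End MaxSeq.

Lemma count_strict (a b : pred R) (l : seq R) x :
  (forall y, a y -> b y) -> x \in l -> b x -> ~~ a x ->
  (count a l < count b l)%N.
Proof.
move=> ab; elim: l => [|y l IH] //; rewrite inE => /orP [/eqP ->|xl] bx nax /=.
  rewrite bx (negPf nax) add0n add1n ltnS; exact: sub_count.
have := IH xl bx nax; have := sub_count ab [:: y].
rewrite /= !addn0 => h1 h2.
by rewrite -addnS leq_add.
Qed.

Lemma zero_times : 0 \in times.
Proof.
apply/mapP; exists set0; first by rewrite mem_enum inE.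
by rewrite big_set0.
Qed.

Lemma decay k t : 0 <= t -> t <= B ->
  (count (fun x : R => (x < t)%R) times <= k)%N ->
  OPT - EI t <= Num.max (OPT - EI 0) 0 * expR (- (t / B)).
Proof.
set a := Num.max (OPT - EI 0) 0.
have a0 : 0 <= a by rewrite le_max lexx orbT.
have base : OPT - EI 0 <= a * expR (- (0 / B)).
  by rewrite mul0r oppr0 expR0 mulr1 le_max lexx.
elim: k t => [|k IH] t t0 tB hk; case: (eqVneq t 0) => [->|tn0] //.
  have tpos : 0 < t by rewrite lt_def tn0 t0.
  have : has (fun x => x < t) times by apply/hasP; exists 0 => //; exact: zero_times.
  by rewrite has_count; move: hk; rewrite leqn0 => /eqP ->.
have tpos : 0 < t by rewrite lt_def tn0 t0.
set s := mx t times.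
have s0 : 0 <= s := mx_ge0 t times.
have st : s < t := mx_lt t times tpos.
have nt : forall x, x \in times -> x < t -> x <= s by move=> x; apply: mx_ub.
have sm : s \in times by case: (mx_mem t times) => [e|]; [rewrite /s e; exact: zero_times|].
have cnt : (count (fun x : R => (x < s)%R) times <= k)%N.
  rewrite -ltnS; apply: leq_trans hk.
  apply: (@count_strict _ _ _ s) => //; last by rewrite ltxx.
  by move=> y ys; apply: lt_trans ys st.
have IHs := IH s s0 (le_trans (ltW st) tB) cnt.
have estep := @EI_step s t s0 (ltW st) nt.
have gb := @gap_bound s s0.
set gs := OPT - EI s in IHs gb.
set S := Ssum s in estep gb.
set x := (t - s) / B.
have x0 : 0 <= x by apply: divr_ge0; [rewrite subr_ge0 ltW | exact: ltW].
have x1 : x <= 1 by rewrite ler_pdivrMr // mul1r; move: s0 tB; lra.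
have hGt : OPT - EI t <= gs * (1 - x).
  rewrite estep.
  have : x * gs <= (t - s) * S.
    have hS : gs / B <= S by rewrite ler_pdivrMr // mulrC.
    have -> : x * gs = (t - s) * (gs / B).
      by rewrite /x; field; rewrite gt_eqF.
    by apply: ler_wpM2l => //; rewrite subr_ge0 ltW.
  rewrite /gs; move=> h; rewrite mulrBr mulr1; move: h; lra.
have e1 : 1 - x <= expR (- x) by have := expR_ge1Dx (- x); lra.
have es0 : 0 <= expR (- (s / B)) by apply: ltW; apply: expR_gt0.
have eq : expR (- (t / B)) = expR (- (s / B)) * expR (- x).
  rewrite -expRD; congr expR; rewrite /x; field; exact: lt0r_neq0.
rewrite eq; apply: le_trans hGt _.
have m0 : gs <= Num.max gs 0 by rewrite le_max lexx.
have m1 : Num.max gs 0 <= a * expR (- (s / B)).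
  by rewrite ge_max IHs /= mulr_ge0.
have hx : 0 <= 1 - x by lra.
apply: (le_trans (y := Num.max gs 0 * (1 - x))); first exact: ler_wpM2r.
rewrite mulrA; apply: (le_trans (y := a * expR (- (s / B)) * (1 - x))).
  exact: ler_wpM2r.
apply: ler_wpM2l => //; exact: mulr_ge0.
Qed.

Hypothesis fmax_bound : forall (S : {set W}) (ys : {ffun W -> {set V}}) (y : {set V}),
      (forall s, ys s \in O) -> y \in O ->
      f ((\bigcup_(s in S) ys s) :|: y) - f (\bigcup_(s in S) ys s) <= fmax.

Lemma fmax_ge0 : 0 <= fmax.
Proof.
pose w0 := pick [::] set0.
have : exists y, p w0 y != 0.
  apply/existsP; rewrite -negb_forall; apply/negP => /forallP h.
  have := p_sum1 w0; rewrite big1 => [|y _]; last exact/eqP.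
  by move/eqP; rewrite eq_sym oner_eq0.
case=> y hy.
have yO : y \in O by apply/negPn/negP => /(p_supp w0) h; move: hy; rewrite h eqxx.
pose ysc : real := [ffun=> y].
have hall : forall s, ysc s \in O by move=> s; rewrite ffunE.
have := @fmax_bound set0 ysc y hall yO; rewrite big_set0 => h.
apply: le_trans h; rewrite subr_ge0; apply: f_mono; exact: subsetUl.
Qed.

Lemma P_O ys : P ys != 0 -> forall s, ys s \in O.
Proof.
move=> Pne s; apply/negP => hs; move/negP: Pne; apply.
by rewrite (P_split s) p_supp ?mul0r //; apply/negP.
Qed.

Lemma union_users (h : hist) ys : consistent h ys -> uniq (map fst h) ->
  hist_union h = \bigcup_(w in hist_users h) ys w.
Proof.
move=> hc hu; rewrite /hist_union (eq_big_seq (fun q => ys q.1)); last first.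
  by move=> q qh; have /allP /(_ q qh) /eqP -> := hc.
rewrite -(big_map fst xpredT ys) big_uniq //; apply: eq_bigl => w.
by rewrite users_mem.
Qed.

Lemma Delta0_fmax (h : hist) ys w : P ys != 0 -> consistent h ys -> uniq (map fst h) ->
  Delta0 w (hist_union h) <= fmax.
Proof.
move=> Pne hc hu; rewrite /Delta0.
apply: (le_trans (y := \sum_z p w z * fmax)); last by rewrite -big_distrl /= p_sum1 mul1r.
apply: ler_sum => z _; case: (boolP (z \in O)) => zO; last by rewrite p_supp // !mul0r.
apply: ler_wpM2l => //; rewrite (@union_users h ys hc hu); apply: fmax_bound => //.
exact: (@P_O ys Pne).
Qed.

Lemma users_nil : hist_users ([::] : hist) = set0.
Proof. by apply/setP => w; rewrite users_mem inE. Qed.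

Lemma greedy_sup n (h : hist) Rem ys :
  hist_union h \subset hist_union (greedy_run c B pick n h Rem ys).
Proof.
elim: n h Rem => [|n IH] h Rem //=; case: ifP => // _.
apply: subset_trans (IH _ _); case: ifP => // _; rewrite union_rcons; exact: subsetUl.
Qed.

Lemma greedy_irun n (h : hist) ys :
  hist_union (irun B n h ys) \subset hist_union (greedy_run c B pick n h (~: hist_users h) ys).
Proof.
elim: n h => [|n IH] h //=; rewrite /nxt; case: ifP => // hne.
case: ifP => hle; last exact: greedy_sup.
have -> : ~: hist_users h :\ pick h (~: hist_users h) =
          ~: hist_users (rcons h (pick h (~: hist_users h), ys (pick h (~: hist_users h)))).
  by apply/setP => x; rewrite users_rcons !inE negb_or andbC.
exact: IH.
Qed.

Lemma psi0 ys : psi 0 ys = [::].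
Proof. by rewrite /psi irun_stuck // /hist_cost big_nil. Qed.

Lemma EI0 : EI 0 = f set0.
Proof.
rewrite /EI (eq_bigr (fun ys => P ys * f set0)); last first.
  by move=> ys _; rewrite psi0 /hist_union /hist_cost !big_nil subrr mul0r addr0.
by rewrite -big_distrl /= P_sum1 mul1r.
Qed.

Lemma OPT_ge0 : 0 <= OPT.
Proof. by apply: sumr_ge0 => ys _; apply: mulr_ge0; [exact: P_ge0|exact: f_ge0]. Qed.

Lemma EIB : EI B <= g_avg f p (greedy_outcome c B pick) + fmax.
Proof.
have -> : g_avg f p (greedy_outcome c B pick) + fmax =
   \sum_ys P ys * (g f (greedy_outcome c B pick ys) + fmax).
  rewrite /g_avg; under [RHS]eq_bigr do rewrite mulrDr.
  by rewrite big_split /= -big_distrl /= P_sum1 mul1r.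
apply: ler_sum => ys _.
case: (eqVneq (P ys) 0) => [->|Pne]; first by rewrite !mul0r.
apply: ler_wpM2l; first exact: P_ge0.
have hc := @irun_cons B #|W| [::] ys isT.
have hu := @irun_uniq B #|W| [::] ys isT.
apply: lerD.
  apply: f_mono; rewrite /greedy_outcome -[setT]setC0 -users_nil; exact: greedy_irun.
have := @irun_term B #|W| [::] ys; rewrite users_nil setC0 cardsT => /(_ (leqnn _)).
rewrite -/(psi B ys); case e: (nxt (psi B ys)) => [w|] ht.
  have hM := @M_ge0 _ ys Pne hc.
  apply: (le_trans (y := c w * M (psi B ys))).
    by apply: ler_wpM2r => //; move: ht; lra.
  by rewrite (@M_step _ ys w Pne hc e); apply: (@Delta0_fmax _ ys w Pne hc hu).
by rewrite /M e mulr0; exact: fmax_ge0.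
Qed.

Lemma OPT_eq : OPT = g_avg f p (policy_outcome pi_opt).
Proof. by rewrite /OPT /g_avg /g /P /tau. Qed.

Lemma main_ineq :
  OPT <= expR 1 / (expR 1 - 1) * (g_avg f p (greedy_outcome c B pick) + fmax).
Proof.
set X := g_avg f p (greedy_outcome c B pick) + fmax.
set e := expR 1.
have e2 : 2 <= e by have := expR_ge1Dx (1 : R); rewrite /e; lra.
have epos : 0 < e by lra.
have hd := @decay (count (fun x : R => (x < B)%R) times) B (ltW B_gt0) (lexx B) (leqnn _).
rewrite divrr ?unitfE ?gt_eqF // expRN -/e in hd.
have ha : Num.max (OPT - EI 0) 0 <= OPT.
  by rewrite ge_max OPT_ge0 EI0 andbT; have := f_ge0 set0; lra.
have hEI := EIB.
have h1 : OPT - X <= OPT / e.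
  apply: le_trans (_ : OPT - EI B <= _); first by move: hEI; rewrite -/X; lra.
  apply: le_trans hd _; apply: ler_wpM2r => //; rewrite invr_ge0; exact: ltW.
have -> : OPT = e / (e - 1) * (OPT - OPT / e).
  by field; apply/andP; split; rewrite gt_eqF //; lra.
apply: ler_wpM2l; first by apply: divr_ge0; lra.
by move: h1; lra.
Qed.

Lemma main_ineq2 :
  g_avg f p (policy_outcome pi_opt) <= expR 1 / (expR 1 - 1) * (g_avg f p (greedy_outcome c B pick) + fmax).
Proof. rewrite -OPT_eq; exact: main_ineq. Qed.


End Main.

Theorem lemma6 (R : realType) (V W : finType) (f : {set V} -> R)
  (O : {set {set V}}) (p : W -> {set V} -> R) (c : W -> R) (B fmax : R)
  (f_ge0 : forall A, 0 <= f A)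
  (f_mono : forall A A' : {set V}, A \subset A' -> f A <= f A')
  (f_submod : forall (A A' : {set V}) (x : V), A \subset A' -> x \notin A' ->
      f (x |: A') - f A' <= f (x |: A) - f A)
  (p_ge0 : forall w y, 0 <= p w y)
  (p_supp : forall w y, y \notin O -> p w y = 0)
  (p_sum1 : forall w, \sum_(y : {set V}) p w y = 1)
  (fmax_bound : forall (S : {set W}) (ys : {ffun W -> {set V}}) (y : {set V}),
      (forall s, ys s \in O) -> y \in O ->
      f ((\bigcup_(s in S) ys s) :|: y) - f (\bigcup_(s in S) ys s) <= fmax)
  (c_gt0 : forall w, 0 < c w) (B_gt0 : 0 < B)
  (pi_opt : history W V -> option W)
  (opt_feas : feasible_policy c B pi_opt)
  (opt_max : forall pi, feasible_policy c B pi ->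
      g_avg f p (policy_outcome pi) <= g_avg f p (policy_outcome pi_opt))
  (pick : history W V -> {set W} -> W)
  (pick_greedy : greedy_rule f p O c pick) :
  g_avg f p (policy_outcome pi_opt)
    <= expR 1 / (expR 1 - 1) * (g_avg f p (greedy_outcome c B pick) + fmax).
Proof.
have h := (@main_ineq2 R V W f O p c B fmax f_ge0 f_mono f_submod p_ge0 p_supp p_sum1 c_gt0 B_gt0
  pick pick_greedy pi_opt opt_feas fmax_bound).
exact: h.
Qed.
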